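(* Let $m>n$ be positive integers and let $G[V_1,V_2]$ be a balanced bipartite graph on $2(m+n-1)$ vertices (so $|V_1|=|V_2|=m+n-1$) with minimum degree $\delta(G)>\frac{3}{4}(m+n-1)$. Suppose a red-blue coloring of the edges of $G$ has no red connected $m$-matching. Then there is a connected component $C$ of the blue subgraph with $|V(C)\cap V_1|\ge n$ and $|V(C)\cap V_2|\ge n$.
   Context: For a red-blue edge coloring of $G$, the red subgraph (resp. blue subgraph) is the spanning subgraph of $G$ consisting of all red (resp. blue) edges; a red (blue) component is a connected component of it. A connected $k$-matching in a graph $H$ is a matching with $k$ edges all lying in a single connected component of $H$; a red connected $k$-matching is a connected $k$-matching in the red subgraph. *)

(* Defs.v *)
From mathcomp Require Import all_boot.
Set Implicit Arguments. Unset Strict Implicit. Unset Printing Implicit Defensive.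

Definition simple_graph (T : finType) (e : rel T) : Prop :=
  symmetric e /\ irreflexive e.

Definition bipartite_with (T : finType) (e : rel T) (V1 : {set T}) : Prop :=
  forall x y, e x y -> (x \in V1) != (y \in V1).

Definition degree (T : finType) (e : rel T) (v : T) : nat := #|[set u | e v u]|.

(* A red-blue colouring is given by a symmetric relation [red]; an edge xy of
   G is red if red x y, blue otherwise. *)
Definition red_sub (T : finType) (e red : rel T) : rel T :=
  fun x y => e x y && red x y.
Definition blue_sub (T : finType) (e red : rel T) : rel T :=
  fun x y => e x y && ~~ red x y.

Definition is_matching (T : finType) (H : rel T) (M : seq (T * T)) : Prop :=
  all (fun p => H p.1 p.2) M /\ uniq (flatten [seq [:: p.1; p.2] | p <- M]).

(* A connected k-matching in H: a matching with k edges all lying in a single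
   connected component of H (the component of some vertex r). *)
Definition connected_matching (T : finType) (H : rel T) (k : nat) : Prop :=
  exists M : seq (T * T), [/\ is_matching H M, size M = k &
    exists r : T, all (fun p => connect H r p.1 && connect H r p.2) M].

(* Main.v *)
Require Import Defs.
From mathcomp Require Import all_boot.
From mathcomp Require Import zify.
Set Implicit Arguments. Unset Strict Implicit. Unset Printing Implicit Defensive.

Lemma card_sub_U (T : finType) (A B C : {set T}) : A \subset B :|: C -> #|A| <= #|B| + #|C|.
Proof. move=> s; apply: leq_trans (subset_leq_card s) _; rewrite cardsU; lia. Qed.

Section Hall.
Variables (T : finType) (H : rel T).

Definition NH (Q S : {set T}) := [set y in Q | [exists x in S, H x y]].

Definition inPQ (P Q : {set T}) := fun pr : T * T => [&& pr.1 \in P, pr.2 \in Q & H pr.1 pr.2].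
Definition flat (M : seq (T * T)) := flatten [seq [:: pr.1; pr.2] | pr <- M].

Lemma flat_mem (P Q : {set T}) (M : seq (T * T)) z : all (inPQ P Q) M -> z \in flat M -> (z \in P) || (z \in Q).
Proof.
elim: M => //= [[a b] M IH] /andP [/and3P [/= aP bQ _] HM].
rewrite /flat /= !inE => /orP [/eqP -> | /orP [/eqP -> | zM]]; rewrite ?aP ?bQ ?orbT //.
exact: IH.
Qed.

Lemma all_inPQ_sub (P Q P' Q' : {set T}) (M : seq (T * T)) : P \subset P' -> Q \subset Q' -> all (inPQ P Q) M -> all (inPQ P' Q') M.
Proof.
move=> sP sQ; apply: sub_all => [[a b]] /and3P [/= aP bQ hab].
by rewrite /inPQ /= (subsetP sP _ aP) (subsetP sQ _ bQ) hab.
Qed.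

Lemma NH_sub Q S : NH Q S \subset Q.
Proof. by apply/subsetP => y; rewrite inE => /andP []. Qed.

Lemma NH0 Q : NH Q set0 = set0.
Proof. by apply/setP => y; rewrite !inE; case: (y \in Q) => //=; apply/existsP => [[x]]; rewrite inE. Qed.

Lemma hall_defect c : forall (P Q : {set T}) k, #|P| <= c -> [disjoint P & Q] ->
  (forall S : {set T}, S \subset P -> k <= #|P :\: S| + #|NH Q S|) ->
  exists M, [/\ all (inPQ P Q) M, uniq (flat M) & size M = k].
Proof.
elim: c => [|c IH] P Q k cP dPQ hyp.
  have k0 : k = 0.
    have := hyp set0 (sub0set _); rewrite setD0 NH0 cards0; lia.
  by exists [::]; rewrite k0.
case: k hyp => [|k] hyp; first by exists [::].
have hyp0 := hyp set0 (sub0set _); rewrite setD0 NH0 cards0 addn0 in hyp0.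
case: (boolP [exists S0 : {set T}, [&& S0 \subset P, S0 != set0, S0 != P & #|P :\: S0| + #|NH Q S0| <= k.+1]]).
  case/existsP => S0 /and4P [sS0 nz0 nP0 tight].
  have ltS0 : #|S0| < #|P| by apply: proper_card; rewrite properEneq nP0 sS0.
  have gtS0 : 0 < #|S0| by rewrite card_gt0.
  have cPS : #|P :\: S0| = #|P| - #|S0| by rewrite cardsDS.
  have eq1 := hyp S0 sS0.
  have [MA [allA uA szA]] : exists M, [/\ all (inPQ S0 (NH Q S0)) M, uniq (flat M) & size M = #|NH Q S0|].
    apply: IH.
    - lia.
    - exact: disjointWl sS0 (disjointWr (NH_sub Q S0) dPQ).
    - move=> S sS.
      have h := hyp S (subset_trans sS sS0).
      have h1 : #|P :\: S| <= #|P :\: S0| + #|S0 :\: S|.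
        apply: card_sub_U; apply/subsetP => x; rewrite !inE.
        by case: (x \in S0); case: (x \in S); case: (x \in P).
      have h2 : #|NH Q S| <= #|NH (NH Q S0) S|.
        apply: subset_leq_card; apply/subsetP => y; rewrite !inE => /andP [yQ /existsP [x /andP [xS hxy]]].
        rewrite yQ /=; apply/andP; split; apply/existsP; exists x; rewrite hxy andbT //.
        exact: (subsetP sS).
      lia.
  have [MB [allB uB szB]] : exists M, [/\ all (inPQ (P :\: S0) (Q :\: NH Q S0)) M, uniq (flat M) & size M = #|P :\: S0|].
    apply: IH.
    - lia.
    - exact: disjointWl (subsetDl _ _) (disjointWr (subsetDl _ _) dPQ).
    - move=> S sS.
      have sSU : S :|: S0 \subset P.
        rewrite subUset sS0 andbT; apply: subset_trans sS (subsetDl _ _).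
      have h := hyp _ sSU.
      have h1 : #|P :\: (S :|: S0)| <= #|(P :\: S0) :\: S|.
        by apply: subset_leq_card; apply/subsetP => x; rewrite !inE; case: (x \in S); case: (x \in S0); case: (x \in P).
      have h2 : #|NH Q (S :|: S0)| <= #|NH Q S0| + #|NH (Q :\: NH Q S0) S|.
        apply: card_sub_U; apply/subsetP => y; rewrite !inE => /andP [yQ /existsP [x /andP [xS hxy]]].
        rewrite yQ /=.
        case: (boolP [exists x0 in S0, H x0 y]) => //= hN.
        apply/existsP; exists x; rewrite hxy andbT.
        move: xS; rewrite inE => /orP [//|xS0].
        by case/negP: hN; apply/existsP; exists x; rewrite xS0.
      lia.
  exists (MA ++ MB); split.
  - rewrite all_cat; apply/andP; split.
      by apply: all_inPQ_sub allA => //; exact: NH_sub.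
    by apply: all_inPQ_sub allB; exact: subsetDl.
  - rewrite /flat map_cat flatten_cat cat_uniq uA uB andbT /=.
    apply/hasPn => z zB; apply/negP => zA.
    have zNQ : z \in NH Q S0 -> z \in Q by apply: (subsetP (NH_sub Q S0)).
    case/orP: (flat_mem allA zA) => [zS0 | zN].
      have zP := subsetP sS0 _ zS0.
      case/orP: (flat_mem allB zB); rewrite !inE ?zS0 //= => /andP [_ zQ].
      by move: (disjointFr dPQ zP); rewrite zQ.
    have zQ := zNQ zN.
    case/orP: (flat_mem allB zB); rewrite inE.
      move=> /andP [_ zP]; by move: (disjointFr dPQ zP); rewrite zQ.
    by rewrite zN.
  - rewrite size_cat szA szB; lia.
move=> hno.
have : 0 < #|NH Q P|.
  have := hyp P (subxx _); rewrite setDv cards0; lia.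
case/card_gt0P => q; rewrite inE => /andP [qQ /existsP [p /andP [pP hpq]]].
have pnQ : (p \in Q) = false := disjointFr dPQ pP.
have qnP : (q \in P) = false := disjointFl dPQ qQ.
have [M [allM uM szM]] : exists M, [/\ all (inPQ (P :\ p) (Q :\ q)) M, uniq (flat M) & size M = k].
  apply: IH.
  - move: cP; rewrite (cardsD1 p P) pP; lia.
  - exact: disjointWl (subsetDl _ _) (disjointWr (subsetDl _ _) dPQ).
  - move=> S sS.
    have sSP : S \subset P := subset_trans sS (subsetDl _ _).
    have pS : p \notin S by apply/negP => /(subsetP sS); rewrite !inE eqxx.
    case: (eqVneq S set0) => [-> | Sn0].
      rewrite setD0 NH0 cards0 addn0; move: hyp0; rewrite (cardsD1 p P) pP; lia.
    have SnP : S != P by apply/eqP => SP; move: pS; rewrite SP pP.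
    have h : k.+1 < #|P :\: S| + #|NH Q S|.
      rewrite ltnNge; apply/negP => hle; case/negP: hno; apply/existsP; exists S.
      by rewrite sSP Sn0 SnP hle.
    have h1 : #|P :\: S| <= #|(P :\ p) :\: S| + #|[set p]|.
      apply: card_sub_U; apply/subsetP => x; rewrite !inE.
      by case: (x =P p); case: (x \in S); case: (x \in P).
    have h2 : #|NH Q S| <= #|NH (Q :\ q) S| + #|[set q]|.
      apply: card_sub_U; apply/subsetP => y; rewrite !inE.
      move=> /andP [yQ ex]; rewrite yQ ex; by case: (y =P q).
    rewrite !cards1 in h1 h2; clear -h h1 h2; lia.
exists ((p, q) :: M); split.
- rewrite /= /inPQ /= pP qQ hpq /=.
  by apply: all_inPQ_sub allM; exact: subsetDl.
- rewrite /flat /= -/(flat M) uM andbT !inE negb_or.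
  have -> : p != q by apply/eqP => epq; move: pnQ; rewrite epq qQ.
  apply/andP; split; apply/negP => /(flat_mem allM); rewrite !inE ?eqxx ?pnQ ?qnP ?andbF //=.
- by rewrite /= szM.
Qed.
End Hall.

Section Main.
Variables (T : finType) (e red : rel T) (m n : nat).
Hypotheses (n_pos : 0 < n) (nm : n < m) (esym : symmetric e) (redsym : symmetric red)
  (hdeg : forall v, 3 * (m + n - 1) < 4 * degree e v).
Local Notation N := (m + n - 1).
Local Notation blue := (blue_sub e red).
Local Notation rd := (red_sub e red).

Definition Nb v := [set u | e v u].
Definition bc (A B : {set T}) := forall a b, a \in A -> b \in B -> e a b -> ~~ red a b.
Definition good (V1 : {set T}) := [/\ bipartite_with e V1, #|V1| = N & #|~: V1| = N].
Definition thick (V1 : {set T}) := exists r, n <= #|[set y in V1 | connect blue r y]| /\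
   n <= #|[set y in ~: V1 | connect blue r y]|.

Lemma degE v : degree e v = #|Nb v|. Proof. by []. Qed.
Lemma inNb u v : (u \in Nb v) = e v u. Proof. by rewrite inE. Qed.

Lemma good_swap V1 : good V1 -> good (~: V1).
Proof.
case=> bip c1 c2; split; rewrite ?setCK //.
move=> x y exy; have := bip x y exy; rewrite !inE.
by case: (x \in V1); case: (y \in V1).
Qed.

Lemma thick_swap V1 : thick (~: V1) -> thick V1.
Proof. by case=> r [h1 h2]; exists r; rewrite setCK in h2; split. Qed.

Lemma Nb_sub V1 v : good V1 -> v \in V1 -> Nb v \subset ~: V1.
Proof.
case=> bip _ _ vV; apply/subsetP => u; rewrite inE => evu.
have := bip v u evu; rewrite inE vV; by case: (u \in V1).
Qed.

Lemma Nb_subC V1 v : good V1 -> v \in ~: V1 -> Nb v \subset V1.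
Proof. move=> g vV; have := Nb_sub (good_swap g) vV; by rewrite setCK. Qed.

Lemma nbr_big (O : {set T}) v (B : {set T}) : #|O| = N -> Nb v \subset O -> B \subset O ->
  #|B| + degree e v <= #|Nb v :&: B| + N.
Proof.
move=> cO sN sB; rewrite degE.
have h1 := cardsID (Nb v) B.
have h2 : #|B :\: Nb v| <= #|O :\: Nb v| by apply: subset_leq_card; apply: setSD.
rewrite (cardsDS sN) in h2.
have h3 : #|Nb v| <= #|O| by apply: subset_leq_card.
rewrite setIC; lia.
Qed.

Lemma nbr_ex (O : {set T}) v (B : {set T}) : #|O| = N -> Nb v \subset O -> B \subset O ->
  N <= 4 * #|B| -> exists2 u, e v u & u \in B.
Proof.
move=> cO sN sB hB; have h := nbr_big cO sN sB; have hd := hdeg v.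
have : 0 < #|Nb v :&: B| by lia.
by case/card_gt0P => u; rewrite in_setI inNb => /andP [evu uB]; exists u.
Qed.

Lemma bc_sym A B : bc A B -> bc B A.
Proof. by move=> h a b aA bB eab; rewrite redsym; apply: h => //; rewrite esym. Qed.

Lemma blue_edge a b : e a b -> ~~ red a b -> connect blue a b.
Proof. by move=> eab nr; apply: connect1; rewrite /blue_sub eab. Qed.

Lemma blue_csym : connect_sym blue.
Proof. by apply: sym_connect_sym => x y; rewrite /blue_sub esym redsym. Qed.

Lemma rd_csym : connect_sym rd.
Proof. by apply: sym_connect_sym => x y; rewrite /red_sub esym redsym. Qed.

Lemma CL1 (O A B : {set T}) : #|O| = N -> B \subset O -> (forall a, a \in A -> Nb a \subset O) ->
  bc A B -> N <= 2 * #|B| -> forall a a', a \in A -> a' \in A -> connect blue a a'.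
Proof.
move=> cO sB sA hbc hB a a' aA a'A.
have h1 := nbr_big cO (sA a aA) sB; have h2 := nbr_big cO (sA a' a'A) sB.
have d1 := hdeg a; have d2 := hdeg a'.
have h3 := cardsU (Nb a :&: B) (Nb a' :&: B).
have h4 : #|(Nb a :&: B) :|: (Nb a' :&: B)| <= #|B|.
  by apply: subset_leq_card; rewrite subUset !subsetIr.
have : 0 < #|(Nb a :&: B) :&: (Nb a' :&: B)| by lia.
case/card_gt0P => b; rewrite !in_setI !inNb => /andP [/andP [eab bB] /andP [ea'b _]].
apply: connect_trans (blue_edge eab (hbc _ _ aA bB eab)) _.
rewrite blue_csym; apply: blue_edge ea'b (hbc _ _ a'A bB ea'b).
Qed.

Lemma count_comp (V : {set T}) r (A : {set T}) : A \subset V -> (forall x, x \in A -> connect blue r x) ->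
  #|A| <= #|[set y in V | connect blue r y]|.
Proof.
move=> sA h; apply: subset_leq_card; apply/subsetP => x xA; rewrite inE (subsetP sA _ xA); exact: h.
Qed.


Lemma Mhalf V1 (S P W Q : {set T}) : good V1 -> S \subset P -> P \subset V1 -> W \subset Q ->
  Q \subset ~: V1 -> bc S Q -> bc P W -> n <= #|P| -> n <= #|Q| -> N <= #|S| + #|Q| ->
  N <= #|P| + #|W| -> 0 < #|S| -> 0 < #|W| -> (N <= 4 * #|S|) || (N <= 4 * #|W|) ->
  N <= 2 * #|P| -> thick V1.
Proof.
move=> g sSP sP sWQ sQ hSQ hPW nP nQ sq pw s0 w0 h4 h2.
have [_ c1 c2] := g.
have nbX : forall x, x \in V1 -> Nb x \subset ~: V1 := fun x => Nb_sub g.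
have nbY : forall y, y \in ~: V1 -> Nb y \subset V1 := fun y => Nb_subC g.
have sSV : S \subset V1 := subset_trans sSP sP.
have sWV : W \subset ~:V1 := subset_trans sWQ sQ.
case/card_gt0P: w0 => y0 y0W.
have Wconn : forall y, y \in W -> connect blue y0 y.
  move=> y yW; apply: (CL1 (O:=V1) (A:=W) (B:=P)) => //.
  - move=> a aW; apply: nbY; exact: subsetP sWV _ aW.
  - exact: bc_sym.
exists y0.
case: (leqP N (4 * #|W|)) => hW.
- have Pconn : forall x, x \in P -> connect blue y0 x.
    move=> x xP; have xV := subsetP sP _ xP.
    have [u exu uW] := nbr_ex c2 (nbX x xV) sWV hW.
    apply: connect_trans (Wconn u uW) _.
    apply: blue_edge; first by rewrite esym.
    apply: (bc_sym hPW) _ _ uW xP _; by rewrite esym.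
  split; first by apply: leq_trans nP (count_comp sP Pconn).
  case/card_gt0P: s0 => x0 x0S.
  have x0P := subsetP sSP _ x0S.
  case: (leqP N (4 * #|S|)) => hS.
  + apply: leq_trans nQ (count_comp sQ _) => y yQ.
    have [a eya aS] := nbr_ex c1 (nbY y (subsetP sQ _ yQ)) sSV hS.
    apply: connect_trans (Pconn a (subsetP sSP _ aS)) _.
    apply: blue_edge; first by rewrite esym.
    apply: hSQ _ _ aS yQ _; by rewrite esym.
  + have hb := nbr_big c2 (nbX x0 (subsetP sSV _ x0S)) sQ.
    have hd := hdeg x0.
    have : #|Nb x0 :&: Q| <= #|[set y in ~: V1 | connect blue y0 y]|.
      apply: count_comp; first by apply: subset_trans (subsetIr _ _) sQ.
      move=> y; rewrite in_setI inNb => /andP [hex yQ].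
      apply: connect_trans (Pconn x0 x0P) _; exact: (blue_edge hex (hSQ _ _ x0S yQ hex)).
    clear -hb hd sq hS nm; lia.
- have hS : N <= 4 * #|S| by lia.
  split.
  + have hb := nbr_big c1 (nbY y0 (subsetP sWV _ y0W)) sP.
    have hd := hdeg y0.
    have : #|Nb y0 :&: P| <= #|[set y in V1 | connect blue y0 y]|.
      apply: count_comp; first by apply: subset_trans (subsetIr _ _) sP.
      move=> x; rewrite in_setI inNb => /andP [hex xP].
      exact: (blue_edge hex ((bc_sym hPW) _ _ y0W xP hex)).
    lia.
  + have [x1 ex1 x1S] := nbr_ex c1 (nbY y0 (subsetP sWV _ y0W)) sSV hS.
    have c01 : connect blue y0 x1 := blue_edge ex1 ((bc_sym hSQ) _ _ (subsetP sWQ _ y0W) x1S ex1).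
    have Qconn : forall y, y \in Q -> connect blue y0 y.
      case: (leqP N (2 * #|Q|)) => hQ.
      * have Sconn : forall x, x \in S -> connect blue x1 x.
          move=> x xS; apply: (CL1 (O:=~:V1) (A:=S) (B:=Q)) => //.
          move=> a aS; apply: nbX; exact: subsetP sSV _ aS.
        move=> y yQ.
        have [a eya aS] := nbr_ex c1 (nbY y (subsetP sQ _ yQ)) sSV hS.
        apply: connect_trans (connect_trans c01 (Sconn a aS)) _.
        apply: blue_edge; first by rewrite esym.
        apply: hSQ _ _ aS yQ _; by rewrite esym.
      * move=> y yQ; apply: (CL1 (O:=V1) (A:=Q) (B:=S)) => //.
        - move=> a aQ; apply: nbY; exact: subsetP sQ _ aQ.
        - exact: bc_sym.
        - clear -hQ sq nm; lia.
        - exact: subsetP sWQ _ y0W.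
    exact: leq_trans nQ (count_comp sQ Qconn).
Qed.

Lemma Mfull V1 (S P W Q : {set T}) : good V1 -> S \subset P -> P \subset V1 -> W \subset Q ->
  Q \subset ~: V1 -> bc S Q -> bc P W -> n <= #|P| -> n <= #|Q| -> N <= #|S| + #|Q| ->
  N <= #|P| + #|W| -> 0 < #|S| -> 0 < #|W| -> (N <= 4 * #|S|) || (N <= 4 * #|W|) ->
  N <= #|P| + #|Q| -> thick V1.
Proof.
move=> g sSP sP sWQ sQ hSQ hPW nP nQ sq pw s0 w0 h4 hpq.
case: (leqP N (2 * #|P|)) => h2; first exact: (Mhalf g sSP sP sWQ sQ hSQ hPW).
apply: thick_swap; apply: (Mhalf (S:=W) (P:=Q) (W:=S) (Q:=P) (good_swap g)) => //;
  rewrite ?setCK //; try lia.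
- exact: bc_sym.
- exact: bc_sym.
Qed.

Lemma Bpp V1 (A B : {set T}) : good V1 -> A \subset V1 -> B \subset ~: V1 -> bc A B ->
  n <= #|A| -> n <= #|B| -> N <= #|A| + #|B| -> thick V1.
Proof.
move=> g sA sB hbc nA nB hs.
apply: (Mfull (S:=A) (P:=A) (W:=B) (Q:=B) g) => //; lia.
Qed.

Lemma rd_edge a b : e a b -> red a b -> connect rd a b.
Proof. by move=> eab rab; apply: connect1; rewrite /red_sub eab. Qed.

Lemma Ssmall V1 x y : good V1 -> x \in V1 -> y \in ~: V1 -> e x y -> ~~ connect rd x y ->
  #|[set z in ~: V1 | connect rd x z]| < n -> #|[set z in V1 | connect rd y z]| < n ->
  n <= #|[set z in V1 | connect blue x z]|.
Proof.
move=> g xV yV exy nxy hK hL.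
have [_ c1 c2] := g.
have nbX : forall x, x \in V1 -> Nb x \subset ~: V1 := fun x => Nb_sub g.
have nbY : forall y, y \in ~: V1 -> Nb y \subset V1 := fun y => Nb_subC g.
have cxy : connect blue x y.
  apply: (blue_edge exy); apply/negP => rxy; case/negP: nxy; exact: rd_edge.
case: (boolP [exists y', [&& y' \in ~: V1, connect blue x y' & ~~ connect rd y y']]).
- case/existsP => y' /and3P [y'V cxy' nyy'].
  have sub : Nb y :&: Nb y' \subset [set z in V1 | connect blue x z].
    apply/subsetP => z; rewrite in_setI !inNb => /andP [eyz ey'z].
    have zV : z \in V1 by apply: (subsetP (nbY y yV) z); rewrite inNb.
    rewrite inE zV /=.
    case: (boolP (connect rd y z)) => cyz.
    + have ny'z : ~~ connect rd y' z.
        apply/negP => cy'z; case/negP: nyy'; apply: connect_trans cyz _; by rewrite rd_csym.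
      apply: connect_trans cxy' (blue_edge ey'z _).
      apply/negP => r; case/negP: ny'z; exact: rd_edge.
    + apply: connect_trans cxy (blue_edge eyz _).
      apply/negP => r; case/negP: cyz; exact: rd_edge.
  have h1 := cardsU (Nb y) (Nb y').
  have h2 : #|Nb y :|: Nb y'| <= #|V1| by apply: subset_leq_card; rewrite subUset !nbY.
  have d1 := hdeg y; have d2 := hdeg y'; rewrite !degE in d1 d2.
  have := subset_leq_card sub; clear -h1 h2 d1 d2 c1 nm; lia.
- move=> hno.
  have Hy : forall y', y' \in ~: V1 -> connect blue x y' -> connect rd y y'.
    move=> y' y'V cxy'; apply/negPn/negP => nyy'; case/negP: hno; apply/existsP; exists y'.
    by rewrite y'V cxy' nyy'.
  set LY := [set z in ~: V1 | connect rd y z].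
  set LX := [set z in V1 | connect rd y z].
  set KY := [set z in ~: V1 | connect rd x z].
  have sNx : Nb x \subset LY :|: KY.
    apply/subsetP => z zN; have zV := subsetP (nbX x xV) z zN; rewrite inNb in zN.
    apply/setUP; case: (boolP (connect rd x z)) => cxz; [right | left]; rewrite inE zV //=.
    apply: Hy zV _; apply: (blue_edge zN).
    apply/negP => r; case/negP: cxz; exact: rd_edge.
  have hLY : N <= 4 * #|LY|.
    have hK2 : #|KY| < n := hK. have := card_sub_U sNx; have := hdeg x; rewrite degE; lia.
  have sLY : LY \subset ~: V1 by apply/subsetP => z; rewrite inE => /andP [].
  have bcL : bc LY (V1 :\: LX).
    move=> a b; rewrite !inE => /andP [_ cya] /andP [nb bV] eab; apply/negP => rab.
    case/negP: nb; rewrite bV /=; exact: connect_trans cya (rd_edge eab rab).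
  have sLX : LX \subset V1 by apply/subsetP => z; rewrite inE => /andP [].
  have cLX : #|V1 :\: LX| = N - #|LX| by rewrite cardsDS // c1.
  have hL2 : #|LX| < n := hL.
  have LYconn : forall z, z \in LY -> connect blue x z.
    move=> w wL; apply: connect_trans cxy _.
    apply: (CL1 (O:=V1) (A:=LY) (B:=V1 :\: LX)) => //.
    - exact: subsetDl.
    - move=> a aL; apply: nbY; exact: subsetP sLY _ aL.
    - clear -cLX hL2 nm; lia.
    - by rewrite inE yV connect0.
  have : #|V1 :\: LX| <= #|[set z in V1 | connect blue x z]|.
    apply: count_comp; first exact: subsetDl.
    move=> x' x'D; have x'V : x' \in V1 by move: x'D; rewrite inE => /andP [].
    have [z ex'z zL] := nbr_ex c2 (nbX x' x'V) sLY hLY.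
    apply: connect_trans (LYconn z zL) _.
    apply: blue_edge; first by rewrite esym.
    by apply: (bcL _ _ zL x'D); rewrite esym.
  clear -cLX hL2 nm; lia.
Qed.

Lemma main_thick V1 : good V1 -> ~ connected_matching rd m -> thick V1.
Proof.
move=> g hno; have [bip c1 c2] := g.
have nbX : forall x, x \in V1 -> Nb x \subset ~: V1 := fun x => Nb_sub g.
case: (boolP [exists r, (m <= #|[set z in V1 | connect rd r z]|) && (m <= #|[set z in ~: V1 | connect rd r z]|)]).
  case/existsP => r /andP [bigX bigY].
  set P0 := [set z in V1 | connect rd r z] in bigX *.
  set Q0 := [set z in ~: V1 | connect rd r z] in bigY *.
  have sP0 : P0 \subset V1 by apply/subsetP => z; rewrite inE => /andP [].
  have sQ0 : Q0 \subset ~: V1 by apply/subsetP => z; rewrite inE => /andP [].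
  have dPQ : [disjoint P0 & Q0].
    rewrite -setI_eq0; apply/eqP/setP => z; rewrite !inE.
    by case: (z \in V1); rewrite ?andbF.
  case: (boolP [forall S : {set T}, (S \subset P0) ==> (m <= #|P0 :\: S| + #|NH rd Q0 S|)]).
    move/forallP => hall.
    have [M [allM uM szM]] := hall_defect (c := #|P0|) (k := m) (leqnn _) dPQ (fun S sS => implyP (hall S) sS).
    exfalso; apply: hno; exists M; split; [split | by [] | exists r].
    - by apply: sub_all allM => pr /and3P [].
    - exact: uM.
    - apply/allP => pr prM; have := allP allM pr prM; case/and3P.
      by rewrite !inE => /andP [_ ->] /andP [_ ->].
  rewrite negb_forall => /existsP [S0]; rewrite negb_imply -ltnNge => /andP [sS0 lt].
  set CX := P0 :\: S0 in lt *.
  set CY := NH rd Q0 S0 in lt *.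
  have sCX : CX \subset V1 := subset_trans (subsetDl _ _) sP0.
  have sCY : CY \subset Q0 := NH_sub _ _ _.
  have hCX : #|CX| = #|P0| - #|S0| by rewrite cardsDS.
  have hS0 : #|S0| <= #|P0| := subset_leq_card sS0.
  have hP0 : #|P0| <= N by rewrite -c1; apply: subset_leq_card.
  have hQ0 : #|Q0| <= N by rewrite -c2; apply: subset_leq_card.
  have hP : #|V1 :\: CX| = N - #|CX| by rewrite cardsDS // c1.
  have hQ : #|~: V1 :\: CY| = N - #|CY| by rewrite cardsDS ?c2 //; apply: subset_trans sCY sQ0.
  have hW : #|Q0 :\: CY| = #|Q0| - #|CY| by rewrite cardsDS.
  have hCY : #|CY| <= #|Q0| := subset_leq_card sCY.
  apply: (Mfull (S:=S0) (P:=V1 :\: CX) (W:=Q0 :\: CY) (Q:=~: V1 :\: CY) g); try lia.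
  - apply/subsetP => z zS; rewrite !inE (subsetP sP0 _ (subsetP sS0 _ zS)) zS //.
  - exact: subsetDl.
  - by apply: setSD.
  - exact: subsetDl.
  - move=> a b aS /setDP [bV nbC] eab; apply/negP => rab.
    case/negP: nbC; rewrite /CY /NH inE /Q0 inE bV /=.
    have aP := subsetP sS0 _ aS; rewrite inE in aP; case/andP: aP => _ cra.
    rewrite (connect_trans cra (rd_edge eab rab)) /=.
    by apply/existsP; exists a; rewrite aS /red_sub eab rab.
  - move=> a b /setDP [aV naC] /setDP [bQ nbC] eab; apply/negP => rab.
    case/negP: nbC; rewrite /CY /NH inE bQ /=.
    move: bQ; rewrite inE => /andP [_ crb].
    have cra : connect rd r a.
      apply: connect_trans crb _; apply: rd_edge; [by rewrite esym | by rewrite redsym].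
    have aS : a \in S0.
      by move: naC; rewrite /CX inE /P0 inE aV cra /= andbT negbK.
    by apply/existsP; exists a; rewrite aS /red_sub eab rab.
move=> nbig.
have nbig' : forall r, (#|[set z in V1 | connect rd r z]| < m) || (#|[set z in ~: V1 | connect rd r z]| < m).
  move=> r; move: nbig; rewrite negb_exists => /forallP /(_ r); by rewrite negb_and -!ltnNge.
case: (boolP [exists r, (n <= #|[set z in V1 | connect rd r z]|) || (n <= #|[set z in ~: V1 | connect rd r z]|)]).
  case/existsP => r hr; have hb := nbig' r.
  set KX := [set z in V1 | connect rd r z] in hr hb.
  set KY := [set z in ~: V1 | connect rd r z] in hr hb.
  have sKX : KX \subset V1 by apply/subsetP => z; rewrite inE => /andP [].
  have sKY : KY \subset ~: V1 by apply/subsetP => z; rewrite inE => /andP [].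
  have cX : #|V1 :\: KX| = N - #|KX| by rewrite cardsDS // c1.
  have cY : #|~: V1 :\: KY| = N - #|KY| by rewrite cardsDS // c2.
  case: (leqP #|KY| #|KX|) => hab.
  - apply: (Bpp (A:=KX) (B:=~: V1 :\: KY) g) => //; try lia.
    + exact: subsetDl.
    + move=> a b; rewrite !inE => /andP [aV cra] /andP [nb bV] eab; apply/negP => rab.
      by case/negP: nb; rewrite bV (connect_trans cra (rd_edge eab rab)).
  - apply: (Bpp (A:=V1 :\: KX) (B:=KY) g) => //; try lia.
    + exact: subsetDl.
    + move=> a b; rewrite !inE => /andP [na aV] /andP [bV crb] eab; apply/negP => rab.
      case/negP: na; rewrite aV /=; apply: connect_trans crb _.
      by apply: rd_edge; [rewrite esym | rewrite redsym].

move=> small.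
have sm : forall r, (#|[set z in V1 | connect rd r z]| < n) && (#|[set z in ~: V1 | connect rd r z]| < n).
  move=> r; move: small; rewrite negb_exists => /forallP /(_ r); by rewrite negb_or -!ltnNge.
have : 0 < #|V1| by rewrite c1; lia.
case/card_gt0P => x xV.
have /andP [_ hKx] := sm x.
set KY := [set z in ~: V1 | connect rd x z] in hKx.
have : 0 < #|Nb x :\: KY|.
  have := cardsD (Nb x) KY; have := hdeg x; rewrite degE.
  have : #|Nb x :&: KY| <= #|KY| by apply: subset_leq_card; apply: subsetIr.
  lia.
case/card_gt0P => y; rewrite !inE => /andP [nyK exy].
have yV : y \in ~: V1 by apply: (subsetP (nbX x xV)); rewrite inNb.
have nxy : ~~ connect rd x y.
  apply/negP => c; move: nyK; rewrite c andbT; move: yV; rewrite inE => hy; by rewrite hy.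
have cxy : connect blue x y.
  apply: (blue_edge exy); apply/negP => rxy; case/negP: nxy; exact: rd_edge.
have /andP [hLy _] := sm y.
have h1 := Ssmall g xV yV exy nxy hKx hLy.
have h2 : n <= #|[set z in ~: V1 | connect blue y z]|.
  apply: (Ssmall (V1 := ~: V1) (x := y) (y := x) (good_swap g)) => //; rewrite ?setCK //.
  - by rewrite esym.
  - by rewrite rd_csym.
exists x; split => //; apply: leq_trans h2 _.
apply: subset_leq_card; apply/subsetP => z; rewrite !inE => /andP [-> cyz] /=.
exact: connect_trans cxy cyz.
Qed.

End Main.

Theorem lemma3p1 (m n : nat) (T : finType) (e red : rel T) (V1 : {set T}) :
  0 < n -> n < m ->
  simple_graph e ->
  bipartite_with e V1 ->
  #|V1| = m + n - 1 -> #|~: V1| = m + n - 1 ->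
  (forall v : T, 3 * (m + n - 1) < 4 * degree e v) ->
  symmetric red ->
  ~ connected_matching (red_sub e red) m ->
  exists r : T,
    n <= #|[set y in V1 | connect (blue_sub e red) r y]| /\
    n <= #|[set y in ~: V1 | connect (blue_sub e red) r y]|.
Proof.
move=> n0 nm [esym _] bip c1 c2 hdeg rsym hno.
by apply: (main_thick n0 nm esym rsym hdeg) => //; split.
Qed.
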